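(* Let $\mathfrak m$ be an infinite cardinal with $\sup\{\mathfrak m^{\mathfrak n}:\mathfrak n<\mathfrak m\}=\mathfrak m$, and let $G$ be a subgroup of $\mathrm{Iso}(\mathbb U_{\mathfrak m})$ of density $<\mathfrak m$. Then the sets $V[x;\varepsilon]\cap G$, where $x\in\mathbb U_{\mathfrak m}$ and $\varepsilon>0$, form a neighbourhood base at the identity of $G$.
   Context: For an infinite cardinal $\mathfrak m$ satisfying $\sup\{\mathfrak m^{\mathfrak n}:\mathfrak n<\mathfrak m\}=\mathfrak m$, $\mathbb U_{\mathfrak m}$ denotes the Urysohn–Katětov space of weight $\mathfrak m$: the (unique up to isometry) complete metric space of density $\mathfrak m$ that contains an isometric copy of every metric space of weight $\le\mathfrak m$ and is $\mathfrak m$-homogeneous (every isometry between two subsets of cardinality $<\mathfrak m$ extends to an isometry of $\mathbb U_{\mathfrak m}$ onto itself). $\mathrm{Iso}(\mathbb U_{\mathfrak m})$ is its isometry group with the topology of pointwise convergence, and $V[x;\varepsilon]=\{g\in\mathrm{Iso}(\mathbb U_{\mathfrak m}) : d(x,gx)<\varepsilon\}$. *)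

(* Defs.v *)
From Stdlib Require Import Reals List.
Open Scope R_scope.

Definition le_card (A B : Type) : Prop :=
  exists f : A -> B, forall a a', f a = f a' -> a = a'.
Definition lt_card (A B : Type) : Prop := le_card A B /\ ~ le_card B A.

Definition infinite_card (M : Type) : Prop := le_card nat M.

(** sup { m^n : n < m } = m, where m = |M| is infinite.  Every cardinal
    n < m is the cardinality of some subset of M; m^n = |{x|P x} -> M|.
    Since m is infinite, m^1 = m is in the family, so sup = m iff every
    m^n (n < m) is <= m. *)
Definition sup_pow_cond (M : Type) : Prop :=
  forall P : M -> Prop, lt_card {x : M | P x} M -> le_card ({x : M | P x} -> M) M.

Definition is_metric {X : Type} (d : X -> X -> R) : Prop :=
  (forall x y, 0 <= d x y) /\
  (forall x y, d x y = 0 <-> x = y) /\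
  (forall x y, d x y = d y x) /\
  (forall x y z, d x z <= d x y + d y z).

Definition complete {X : Type} (d : X -> X -> R) : Prop :=
  forall u : nat -> X,
    (forall eps, 0 < eps -> exists N, forall n p, (n >= N)%nat -> (p >= N)%nat -> d (u n) (u p) < eps) ->
    exists l, forall eps, 0 < eps -> exists N, forall n, (n >= N)%nat -> d (u n) l < eps.

Definition dense_set {X : Type} (d : X -> X -> R) (D : X -> Prop) : Prop :=
  forall x eps, 0 < eps -> exists y, D y /\ d x y < eps.

(** weight (= density, for metric spaces) <= |M| *)
Definition weight_le {X : Type} (d : X -> X -> R) (M : Type) : Prop :=
  exists D, dense_set d D /\ le_card {y : X | D y} M.

Definition density_eq {X : Type} (d : X -> X -> R) (M : Type) : Prop :=
  weight_le d M /\ forall D, dense_set d D -> le_card M {y : X | D y}.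

Definition is_iso {X : Type} (d : X -> X -> R) (g : X -> X) : Prop :=
  (forall x y, d (g x) (g y) = d x y) /\ (forall y, exists x, g x = y).

Definition Urysohn_Katetov (M : Type) (X : Type) (d : X -> X -> R) : Prop :=
  is_metric d /\ complete d /\ density_eq d M /\
  (forall (Y : Type) (dY : Y -> Y -> R), is_metric dY -> weight_le dY M ->
     exists f : Y -> X, forall a b, d (f a) (f b) = dY a b) /\
  (forall (A : X -> Prop), lt_card {x : X | A x} M ->
     forall f : {x : X | A x} -> X,
       (forall a b, d (f a) (f b) = d (proj1_sig a) (proj1_sig b)) ->
       exists g, is_iso d g /\ forall a, g (proj1_sig a) = f a).

Definition subgroup_Iso {X : Type} (d : X -> X -> R) (G : (X -> X) -> Prop) : Prop :=
  (forall g, G g -> is_iso d g) /\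
  G (fun x => x) /\
  (forall g h, G g -> G h -> G (fun x => g (h x))) /\
  (forall g, G g -> exists h, G h /\ (forall x, h (g x) = x) /\ (forall x, g (h x) = x)).

(** Topology of pointwise convergence, relativised to G. *)
Definition open_in {X : Type} (d : X -> X -> R) (G : (X -> X) -> Prop)
    (U : (X -> X) -> Prop) : Prop :=
  (forall g, U g -> G g) /\
  (forall g, U g -> exists (xs : list X) (eps : R), 0 < eps /\
      forall h, G h -> (forall y, In y xs -> d (h y) (g y) < eps) -> U h).

Definition nbhd_in {X : Type} (d : X -> X -> R) (G : (X -> X) -> Prop)
    (g0 : X -> X) (N : (X -> X) -> Prop) : Prop :=
  (forall g, N g -> G g) /\
  exists U, open_in d G U /\ U g0 /\ forall g, U g -> N g.

Definition density_lt {X : Type} (d : X -> X -> R) (G : (X -> X) -> Prop) (M : Type) : Prop :=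
  exists S : (X -> X) -> Prop, (forall s, S s -> G s) /\
    lt_card {s : X -> X | S s} M /\
    forall U, open_in d G U -> (exists g, U g) -> exists s, S s /\ U s.

Definition nbhd_base {X : Type} (d : X -> X -> R) (G : (X -> X) -> Prop)
    (g0 : X -> X) (B : ((X -> X) -> Prop) -> Prop) : Prop :=
  (forall V, B V -> nbhd_in d G g0 V) /\
  (forall N, nbhd_in d G g0 N -> exists V, B V /\ forall g, V g -> N g).

Definition VG {X : Type} (d : X -> X -> R) (G : (X -> X) -> Prop) (x : X) (eps : R)
    : (X -> X) -> Prop := fun g => G g /\ d x (g x) < eps.

(* Main.v *)
Require Import Defs.
From Stdlib Require Import Reals List Lra Lia Classical ClassicalEpsilon FunctionalExtensionality ProofIrrelevance.
Open Scope R_scope.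

Lemma sig_eq {A : Type} (P : A -> Prop) (a b : {x | P x}) : proj1_sig a = proj1_sig b -> a = b.
Proof. destruct a as [a Ha], b as [b Hb]; simpl; intros ->; f_equal; apply proof_irrelevance. Qed.

Lemma le_card_trans A B C : le_card A B -> le_card B C -> le_card A C.
Proof.
  intros [f Hf] [g Hg]; exists (fun a => g (f a)); intros a a' H; auto.
Qed.

Lemma le_card_refl A : le_card A A.
Proof. exists (fun a => a); auto. Qed.

Definition code (o : option bool) : nat :=
  match o with None => 0%nat | Some true => 1%nat | Some false => 2%nat end.

Lemma code_inj o o' : code o = code o' -> o = o'.
Proof. destruct o as [[]|], o' as [[]|]; simpl; congruence. Qed.

Definition dec (P : Prop) : bool :=
  if excluded_middle_informative P then true else false.

Lemma dec_true (P : Prop) : P -> dec P = true.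
Proof. unfold dec; destruct excluded_middle_informative; tauto. Qed.
Lemma dec_false (P : Prop) : ~P -> dec P = false.
Proof. unfold dec; destruct excluded_middle_informative; tauto. Qed.

Lemma to_fun (T : Type) (t0 : T) : le_card (option T * option bool) (T -> nat).
Proof.
  exists (fun w => match fst w with
          | Some s => fun t => if dec (t = s) then S (code (snd w)) else 0%nat
          | None => fun _ => (4 + code (snd w))%nat end).
  intros [o tg] [o' tg']; simpl; intros H.
  destruct o as [s|], o' as [s'|].
  - pose proof (f_equal (fun h => h s) H) as H1; simpl in H1.
    rewrite dec_true in H1 by auto.
    destruct (classic (s = s')) as [<-|Hne].
    + rewrite dec_true in H1 by auto. injection H1; intro; f_equal; auto using code_inj.
    + rewrite dec_false in H1 by auto. discriminate.
  - pose proof (f_equal (fun h => h s) H) as H1; simpl in H1.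
    rewrite dec_true in H1 by auto. destruct tg as [[]|], tg' as [[]|]; simpl in H1; lia.
  - pose proof (f_equal (fun h => h s') H) as H1; simpl in H1.
    rewrite dec_true in H1 by auto. destruct tg as [[]|], tg' as [[]|]; simpl in H1; lia.
  - pose proof (f_equal (fun h => h t0) H) as H1; simpl in H1.
    f_equal; apply code_inj; lia.
Qed.

Lemma diag (T : Type) (t0 : T) (J : (T -> nat) -> option T * option bool) :
  (forall a b, J a = J b -> a = b) -> False.
Proof.
  intros HJ.
  set (v := fun w t => match excluded_middle_informative (exists psi, J psi = w) with
            | left H => proj1_sig (constructive_indefinite_description _ H) t
            | right _ => 0%nat end).
  assert (vP : forall psi w t, J psi = w -> v w t = psi t).
  { intros psi w t Hw. unfold v. destruct excluded_middle_informative as [H|H].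
    - destruct (constructive_indefinite_description _ H) as [psi' Hp]; simpl.
      rewrite (HJ psi' psi) by congruence; reflexivity.
    - exfalso; eauto. }
  set (phi := fun t => S (v (Some t, None) t + v (Some t, Some true) t + v (Some t, Some false) t
                          + v (None, None) t0 + v (None, Some true) t0 + v (None, Some false) t0)).
  destruct (J phi) as [o tg] eqn:E.
  destruct o as [t|].
  - pose proof (vP phi _ t E) as H1. unfold phi in H1.
    destruct tg as [[]|]; lia.
  - pose proof (vP phi _ t0 E) as H1. unfold phi in H1.
    destruct tg as [[]|]; lia.
Qed.

Lemma pow_le (M T : Type) : infinite_card M -> sup_pow_cond M -> lt_card T M ->
  le_card (T -> nat) M.
Proof.
  intros [iota Hiota] Hsup [[e He] Hnot].
  set (P := fun m => exists t, e t = m).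
  assert (pre : forall pm : {m | P m}, {t | e t = proj1_sig pm}).
  { intros [m Hm]; simpl. apply constructive_indefinite_description; exact Hm. }
  assert (Hlt : lt_card {m | P m} M).
  { split.
    - exists (@proj1_sig _ _); intros; apply sig_eq; auto.
    - intros [k Hk]; apply Hnot.
      exists (fun m => proj1_sig (pre (k m))).
      intros a a' H.
      apply Hk. apply sig_eq.
      destruct (pre (k a)) as [t1 E1], (pre (k a')) as [t2 E2]; simpl in *.
      congruence. }
  destruct (Hsup P Hlt) as [h Hh].
  exists (fun phi => h (fun pm => iota (phi (proj1_sig (pre pm))))).
  intros phi psi H. apply Hh in H.
  apply functional_extensionality; intro t.
  pose proof (f_equal (fun F => F (exist P (e t) (ex_intro _ t eq_refl))) H) as H1.
  simpl in H1. apply Hiota in H1.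
  destruct (pre (exist P (e t) (ex_intro _ t eq_refl))) as [t' Et]; simpl in *.
  apply He in Et; subst; auto.
Qed.

Lemma keylt (M T U : Type) (t0 : T) : infinite_card M -> sup_pow_cond M -> lt_card T M ->
  le_card U (option T * option bool) -> lt_card U M.
Proof.
  intros Hi Hs Hlt HU.
  pose proof (pow_le M T Hi Hs Hlt) as Hp.
  split.
  - eapply le_card_trans; [exact HU|]. eapply le_card_trans; [apply (to_fun T t0)|exact Hp].
  - intros HMU.
    destruct (le_card_trans _ _ _ Hp (le_card_trans _ _ _ HMU HU)) as [J HJ].
    exact (diag T t0 J HJ).
Qed.

Lemma realize (M X : Type) (d : X -> X -> R) (A : X -> Prop) (f : X -> R) :
  Urysohn_Katetov M X d ->
  (forall a, 0 < f a) -> (forall a b, f a <= d a b + f b) -> (forall a b, d a b <= f a + f b) ->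
  (forall U, le_card U (option {z | A z}) -> lt_card U M) ->
  exists x, forall z, A z -> d x z = f z.
Proof.
  intros [Hm [_ [_ [Huniv Hhom]]]] fpos flip fkat HL.
  destruct Hm as [dnn [d0 [dsym dtri]]].
  set (Y := option {z | A z}).
  set (dY := fun (a b : Y) => match a, b with
      | Some a, Some b => d (proj1_sig a) (proj1_sig b)
      | Some a, None => f (proj1_sig a)
      | None, Some b => f (proj1_sig b)
      | None, None => 0 end).
  assert (HmY : is_metric dY).
  { split; [|split; [|split]].
    - intros [a|] [b|]; simpl; [auto|apply Rlt_le; auto|apply Rlt_le; auto|lra].
    - intros [a|] [b|]; simpl; split; intro H.
      + f_equal; apply sig_eq; apply d0; auto.
      + injection H; intros ->; apply d0; auto.
      + pose proof (fpos (proj1_sig a)); lra.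
      + discriminate.
      + pose proof (fpos (proj1_sig b)); lra.
      + discriminate.
      + auto.
      + lra.
    - intros [a|] [b|]; simpl; auto.
    - intros [a|] [b|] [c|]; simpl;
      repeat match goal with
      | x : {z | A z} |- _ =>
          lazymatch goal with
          | H : 0 < f (proj1_sig x) |- _ => fail
          | _ => pose proof (fpos (proj1_sig x)) end end;
      repeat match goal with
      | x : {z | A z}, y : {z | A z} |- _ =>
          lazymatch goal with
          | H : f (proj1_sig x) <= d (proj1_sig x) (proj1_sig y) + f (proj1_sig y) |- _ => fail
          | _ => pose proof (flip (proj1_sig x) (proj1_sig y));
                 pose proof (fkat (proj1_sig x) (proj1_sig y));
                 pose proof (dsym (proj1_sig x) (proj1_sig y))
          end end;
      try lra; try apply dtri.
 }
  assert (HwY : weight_le dY M).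
  { exists (fun _ => True); split.
    - intros y eps He; exists y; split; auto.
      assert (dY y y = 0) by (apply (proj1 (proj2 HmY)); auto). lra.
    - apply HL. exists (@proj1_sig _ _); intros; apply sig_eq; auto. }
  destruct (Huniv Y dY HmY HwY) as [e He].
  set (B := fun w => exists a : {z | A z}, e (Some a) = w).
  assert (ch : forall w : {w | B w}, {a : {z | A z} | e (Some a) = proj1_sig w}).
  { intros [w Hw]; simpl; apply constructive_indefinite_description; exact Hw. }
  assert (HB : lt_card {w | B w} M).
  { apply HL. exists (fun w => Some (proj1_sig (ch w))).
    intros w w' H. injection H; intro H1. apply sig_eq.
    destruct (ch w) as [a Ea], (ch w') as [a' Ea']; simpl in *. congruence. }
  destruct (Hhom B HB (fun w => proj1_sig (proj1_sig (ch w)))) as [g0 [[Hg0 _] Hg0e]].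
  { intros w w'.
    destruct (ch w) as [a Ea], (ch w') as [a' Ea']; simpl in *.
    rewrite <- Ea, <- Ea', He; reflexivity. }
  exists (g0 (e None)).
  intros z Hz.
  set (a := exist A z Hz).
  set (w := exist B (e (Some a)) (ex_intro _ a eq_refl)).
  pose proof (Hg0e w) as H1. simpl in H1.
  destruct (ch w) as [a' Ea'] eqn:Ech; simpl in *.
  assert (Eaa : proj1_sig a' = z).
  { apply d0. pose proof (He (Some a') (Some a)) as H2. rewrite Ea' in H2.
    simpl in H2. rewrite <- H2. apply d0; reflexivity. }
  rewrite <- Eaa at 1. rewrite <- H1, Hg0, He. simpl. congruence.
Qed.

Lemma Rmin_lt_cases a b c : Rmin a b < c -> a < c \/ b < c.
Proof. unfold Rmin; destruct Rle_dec; lra. Qed.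

Theorem lemma4p4p1 (M X : Type) (d : X -> X -> R) (G : (X -> X) -> Prop) :
  infinite_card M -> sup_pow_cond M -> Urysohn_Katetov M X d ->
  subgroup_Iso d G -> density_lt d G M ->
  nbhd_base d G (fun x => x)
    (fun V => exists (x : X) (eps : R), 0 < eps /\ forall g, V g <-> VG d G x eps g).
Proof.
  intros Hinf Hsup HUK HG Hdens.
  pose proof HUK as [[dnn [d0 [dsym dtri]]] [_ [[_ Hdeq] _]]].
  destruct HG as [Giso [Gid [Gcomp Ginv]]].
  destruct Hdens as [S [SG [Slt Sdense]]].
  assert (HoG : open_in d G G).
  { split; auto. intros g _; exists nil, 1; split; [lra|]; auto. }
  destruct (Sdense G HoG (ex_intro _ (fun x => x) Gid)) as [s0 [Hs0 _]].
  set (SS := {s : X -> X | S s}).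
  set (t0 := exist S s0 Hs0 : SS).
  assert (Key : forall U, le_card U (option SS * option bool) -> lt_card U M).
  { intros U HU. exact (keylt M SS U t0 Hinf Hsup Slt HU). }
  assert (Hex : exists x : X, True).
  { destruct Hinf as [iota _].
    assert (Hd : dense_set d (fun _ => True)).
    { intros x e He; exists x; split; auto. rewrite (proj2 (d0 x x) eq_refl); auto. }
    destruct (Hdeq _ Hd) as [k _]. exists (proj1_sig (k (iota 0%nat))); auto. }
  destruct Hex as [xany _].
  assert (Ctrl : forall L eps, 0 < eps -> exists x delta, 0 < delta /\
            forall g, G g -> d x (g x) < delta -> forall y, In y L -> d y (g y) < eps).
  { induction L as [|b L IHL]; intros eps He.
    - exists xany, 1; split; [lra|]. intros g _ _ y [].
    - destruct (IHL eps He) as [x0 [del0 [Hdel0 Hc0]]].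
      destruct (Rlt_or_le (d x0 b) (eps/3)) as [Hclose|Hfar].
      + exists x0, (Rmin del0 (eps/3)); split.
        { apply Rmin_glb_lt; lra. }
        intros g Gg Hg y [<-|Hy].
        * pose proof (Rmin_l del0 (eps/3)); pose proof (Rmin_r del0 (eps/3)).
          pose proof (dtri b x0 (g b)); pose proof (dtri x0 (g x0) (g b)).
          pose proof (proj1 (Giso g Gg) x0 b). pose proof (dsym b x0). lra.
        * apply (Hc0 g Gg); auto. pose proof (Rmin_l del0 (eps/3)); lra.
      + set (sig := d x0 b).
        set (p := x0). set (q := b).
        set (K := sig + 1). set (eta := sig / 2).
        set (f := fun z => Rmin (K + d z p) (K + eta + d z q)).
        set (img := fun (o : option SS) (bb : bool) =>
                      (match o with Some s => proj1_sig s | None => fun y => y end)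
                        (if bb then q else p)).
        set (A := fun z => exists (o : option SS) (bb : bool), z = img o bb).
        assert (HL : forall U, le_card U (option {z | A z}) -> lt_card U M).
        { intros U HU. apply Key. eapply le_card_trans; [exact HU|].
          assert (tag : forall z : {z | A z}, {ob : option SS * bool | proj1_sig z = img (fst ob) (snd ob)}).
          { intros [z Hz]; simpl. apply constructive_indefinite_description.
            destruct Hz as [o [bb H]]. exists (o, bb); auto. }
          exists (fun oz => match oz with
                  | None => (None, None)
                  | Some z => (fst (proj1_sig (tag z)), Some (snd (proj1_sig (tag z)))) end).
          intros [z|] [z'|]; try discriminate; auto.
          intros H. f_equal. apply sig_eq.
          destruct (tag z) as [[o bb] E], (tag z') as [[o' bb'] E']; simpl in *.
          injection H; intros; subst. congruence. }
        assert (Hsig : 0 < sig) by (unfold sig; lra).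
        assert (Hdpq : d p q = sig) by reflexivity.
        assert (Hx : exists x, forall z, A z -> d x z = f z).
        { apply (realize M X d A f HUK); auto.
          - intro a; unfold f, Rmin; destruct Rle_dec; pose proof (dnn a p); pose proof (dnn a q);
              unfold K, eta in *; lra.
          - intros a c; unfold f, Rmin; destruct Rle_dec; destruct Rle_dec;
              pose proof (dtri a c p); pose proof (dtri a c q); lra.
          - intros a c; unfold f, Rmin; destruct Rle_dec; destruct Rle_dec;
              pose proof (dtri a p c); pose proof (dtri a q c); pose proof (dtri p q c);
              pose proof (dtri q p c);
              pose proof (dsym c p); pose proof (dsym c q); pose proof (dsym p q);
              pose proof (dnn a p); pose proof (dnn a q); pose proof (dnn c p); pose proof (dnn c q);
              unfold K, eta in *; lra. }
        destruct Hx as [x Hx].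
        set (rho := Rmin (sig/8) (Rmin (del0/3) (eps/3))).
        assert (Hr1 : rho <= sig/8) by apply Rmin_l.
        assert (Hr2 : rho <= del0/3) by (eapply Rle_trans; [apply Rmin_r|apply Rmin_l]).
        assert (Hr3 : rho <= eps/3) by (eapply Rle_trans; [apply Rmin_r|apply Rmin_r]).
        assert (Hr0 : 0 < rho) by (unfold rho; repeat apply Rmin_glb_lt; lra).
        exists x, rho; split; [exact Hr0|].
        intros g Gg Hg.
        set (L3 := x :: p :: q :: nil).
        set (U := fun h => G h /\ forall y, In y L3 -> d (h y) (g y) < rho).
        assert (HU : open_in d G U).
        { split; [intros h [Gh _]; auto|].
          intros h [Gh Hh].
          set (m := Rmax (d (h x) (g x)) (Rmax (d (h p) (g p)) (d (h q) (g q)))).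
          assert (Hm : forall y, In y L3 -> d (h y) (g y) <= m).
          { intros y [<-|[<-|[<-|[]]]]; unfold m.
            - apply Rmax_l.
            - eapply Rle_trans; [apply Rmax_l|apply Rmax_r].
            - eapply Rle_trans; [apply Rmax_r|apply Rmax_r]. }
          assert (Hmr : m < rho).
          { unfold m; repeat apply Rmax_lub_lt; apply Hh; simpl; auto. }
          exists L3, (rho - m); split; [lra|].
          intros h' Gh' Hh'. split; auto. intros y Hy.
          pose proof (Hh' y Hy); pose proof (Hm y Hy); pose proof (dtri (h' y) (h y) (g y)). lra. }
        destruct (Sdense U HU) as [s [Ss [Gs Hs]]].
        { exists g; split; auto. intros y _. rewrite (proj2 (d0 _ _) eq_refl); auto. }
        assert (Hsx : d (s x) (g x) < rho) by (apply Hs; simpl; auto).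
        assert (Hsp : d (s p) (g p) < rho) by (apply Hs; simpl; auto).
        assert (Hsq : d (s q) (g q) < rho) by (apply Hs; simpl; auto).
        assert (Ap : A p) by (exists None, false; reflexivity).
        assert (Aq : A q) by (exists None, true; reflexivity).
        assert (Asp : A (s p)) by (exists (Some (exist S s Ss)), false; reflexivity).
        assert (Asq : A (s q)) by (exists (Some (exist S s Ss)), true; reflexivity).
        assert (siso : forall a c, d (s a) (s c) = d a c) by (apply (Giso s Gs)).
        assert (dpp : d p p = 0) by (apply d0; auto).
        assert (dqq : d q q = 0) by (apply d0; auto).
        assert (fp : f p = K).
        { unfold f, Rmin; destruct Rle_dec; unfold eta in *; lra. }
        assert (fq : f q = K + eta).
        { unfold f, Rmin; rewrite dqq; rewrite (dsym q p); destruct Rle_dec; unfold eta in *; lra. }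
        assert (Hxsx : d x (s x) < 2 * rho).
        { pose proof (dtri x (g x) (s x)); pose proof (dsym (g x) (s x)); lra. }
        assert (Hspp : d (s p) p < 2 * rho).
        { pose proof (dtri x (s x) (s p)). rewrite siso in H.
          rewrite (Hx _ Ap), (Hx _ Asp), fp in H.
          assert (Hf : f (s p) < K + 2 * rho) by lra.
          unfold f in Hf. apply Rmin_lt_cases in Hf.
          destruct Hf as [Hf|Hf]; [lra|]. pose proof (dnn (s p) q). unfold eta in *; lra. }
        assert (Hsqq : d (s q) q < 2 * rho).
        { pose proof (dtri x (s x) (s q)). rewrite siso in H.
          rewrite (Hx _ Aq), (Hx _ Asq), fq in H.
          assert (Hf : f (s q) < K + eta + 2 * rho) by lra.
          unfold f in Hf. apply Rmin_lt_cases in Hf.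
          destruct Hf as [Hf|Hf]; [|lra].
          pose proof (siso p q). pose proof (dtri (s p) p (s q)). pose proof (dsym p (s q)).
          unfold eta in *; lra. }
        intros y [<-|Hy].
        * pose proof (dtri q (s q) (g q)); pose proof (dsym q (s q)). fold q. lra.
        * apply (Hc0 g Gg); auto.
          pose proof (dtri p (s p) (g p)); pose proof (dsym p (s p)). fold p. lra. }
  split.
  - intros V [x [eps [He HV]]].
    split; [intros g Hg; apply HV in Hg; destruct Hg; auto|].
    exists (VG d G x eps); split; [split|split].
    + intros g [Gg _]; auto.
    + intros g [Gg Hg]. exists (x :: nil), (eps - d x (g x)); split; [lra|].
      intros h Gh Hh. split; auto.
      pose proof (Hh x (or_introl eq_refl)). pose proof (dtri x (g x) (h x)).
      pose proof (dsym (g x) (h x)). lra.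
    + split; auto. rewrite (proj2 (d0 x x) eq_refl); auto.
    + intros g Hg; apply HV; auto.
  - intros N [NG [U [[UG Uo] [Uid UN]]]].
    destruct (Uo _ Uid) as [xs [eps [He Hxs]]].
    destruct (Ctrl xs eps He) as [x [del [Hdel Hc]]].
    exists (VG d G x del); split.
    + exists x, del; split; auto. intros g; tauto.
    + intros g [Gg Hg]. apply UN, Hxs; auto.
      intros y Hy. rewrite dsym. apply (Hc g Gg Hg y Hy).
Qed.
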